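(* Let $\kappa\ge\aleph_0$ be a cardinal, let $P$ be a $d$-dimensional $k$-template, and let $X_0,X_1,\dots,X_{d-1}$ be sets with $|X_i|\ge\kappa^{+i}$ for each $i<d$. Let $X=X_0\times X_1\times\cdots\times X_{d-1}$. Then $\chi(L(X,P))\ge\kappa$.
   Context: Here $1\le d<\omega$, $2\le k<\omega$. A $d$-dimensional $k$-template is a set $P$ of $d$-tuples with $|P|=k$. If $P,Q$ are $d$-dimensional templates, $Q$ is a homomorphic image of $P$ if there is a surjection $f:P\to Q$ such that for all $x,y\in P$ and $i<d$, $x_i=y_i$ implies $f(x)_i=f(y)_i$. For $X=X_0\times\cdots\times X_{d-1}$, $L(X,P)$ is the $k$-hypergraph with vertex set $X$ whose edges are the $k$-templates $Q\subseteq X$ that are homomorphic images of $P$. $\chi$ is the chromatic number (least cardinal number of colors in a vertex coloring not constant on any edge). $\kappa^+$ is the successor cardinal, $\kappa^{+0}=\kappa$, $\kappa^{+(n+1)}=(\kappa^{+n})^+$. *)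

(* Defs.v *)
From mathcomp Require Import all_boot.
Set Implicit Arguments. Unset Strict Implicit. Unset Printing Implicit Defensive.

Definition card_le (A B : Type) : Prop := exists f : A -> B, injective f.
Definition card_lt (A B : Type) : Prop := card_le A B /\ ~ card_le B A.
Definition card_eq (A B : Type) : Prop := exists f : A -> B, bijective f.

Definition is_successor (M L : Type) : Prop :=
  card_lt M L /\ forall Z : Type, card_lt M Z -> card_le L Z.

Fixpoint is_succ_pow (n : nat) (K L : Type) : Prop :=
  match n with
  | 0 => card_eq K L
  | m.+1 => exists M : Type, is_succ_pow m K M /\ is_successor M L
  end.

Definition card_ge_succ_pow (n : nat) (K Y : Type) : Prop :=
  exists L : Type, is_succ_pow n K L /\ card_le L Y.

Definition dtuple (d : nat) (A : 'I_d -> Type) := forall i : 'I_d, A i.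

Definition is_template (d k : nat) (A : 'I_d -> Type) (Q : dtuple A -> Prop) : Prop :=
  exists e : 'I_k -> dtuple A, injective e /\ forall v, Q v <-> exists j, e j = v.

Definition hom_image (d : nat) (A B : 'I_d -> Type)
    (P : dtuple A -> Prop) (Q : dtuple B -> Prop) : Prop :=
  exists f : {x | P x} -> {y | Q y},
    (forall y : {y | Q y}, exists x, f x = y) /\
    forall (x y : {x | P x}) (i : 'I_d),
      proj1_sig x i = proj1_sig y i -> proj1_sig (f x) i = proj1_sig (f y) i.

Definition L_edge (d k : nat) (A X : 'I_d -> Type) (P : dtuple A -> Prop)
    (Q : dtuple X -> Prop) : Prop :=
  is_template k Q /\ hom_image P Q.

Definition proper_coloring (V C : Type) (E : (V -> Prop) -> Prop) (c : V -> C) : Prop :=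
  forall Q, E Q -> exists x y, Q x /\ Q y /\ c x <> c y.

Definition chi_ge (V : Type) (E : (V -> Prop) -> Prop) (K : Type) : Prop :=
  forall (C : Type) (c : V -> C), card_lt C K -> ~ proper_coloring E c.

(* Main.v *)
Require Import Defs.
From mathcomp Require Import all_boot.
From mathcomp Require Import boolp classical_sets.
Set Implicit Arguments. Unset Strict Implicit. Unset Printing Implicit Defensive.
Local Open Scope classical_set_scope.

Lemma cle_refl (A : Type) : card_le A A.
Proof. by exists id. Qed.

Lemma cle_trans (A B C : Type) : card_le A B -> card_le B C -> card_le A C.
Proof. by move=> [f fi] [g gi]; exists (g \o f) => x y /gi /fi. Qed.

Lemma cle_total (E B : Type) : card_le E B \/ card_le B E.
Proof.
pose PP : set (set (E * B)) := fun G =>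
  (forall x y y', G (x, y) -> G (x, y') -> y = y') /\
  (forall x x' y, G (x, y) -> G (x', y) -> x = x').
have [G [[Gf Gi] Gmax]] : exists G, PP G /\ forall B, G `<` B -> ~ PP B.
  apply: Zorn_bigcup => F FP tot; split.
  - move=> x y y' [G1 F1 G1y] [G2 F2 G2y].
    case: (tot _ _ F1 F2) => [s|s].
      by apply: (FP _ F2).1 G2y; apply: s.
    by apply: (FP _ F1).1 G1y _; apply: s.
  - move=> x x' y [G1 F1 G1y] [G2 F2 G2y].
    case: (tot _ _ F1 F2) => [s|s].
      by apply: (FP _ F2).2 G2y; apply: s.
    by apply: (FP _ F1).2 G1y _; apply: s.
case: (pselect (forall x, exists y, G (x, y))) => [hx|hx].
  left; exists (fun x => proj1_sig (cid (hx x))) => x x' e.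
  case: (cid (hx x)) e => y Hy /=; case: (cid (hx x')) => y' Hy' /= e.
  by subst; apply: Gi Hy Hy'.
case: (pselect (forall y, exists x, G (x, y))) => [hy|hy].
  right; exists (fun y => proj1_sig (cid (hy y))) => y y' e.
  case: (cid (hy y)) e => x Hx /=; case: (cid (hy y')) => x' Hx' /= e.
  by subst; apply: Gf Hx Hx'.
exfalso.
have [x0 hx0] : exists x0, forall y, ~ G (x0, y).
  by apply: contrapT => h; apply: hx => x; apply: contrapT => h2; apply: h; exists x; move=> y g; apply: h2; exists y.
have [y0 hy0] : exists y0, forall x, ~ G (x, y0).
  by apply: contrapT => h; apply: hy => y; apply: contrapT => h2; apply: h; exists y; move=> x g; apply: h2; exists x.
apply: (Gmax (fun p => G p \/ p = (x0, y0))).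
  split; first by move=> p Gp; left.
  by move=> h; apply: (hx0 y0); apply: h; right.
split.
- move=> x y y' [g|/pair_equal_spec[e1 e2]] [g'|/pair_equal_spec[e1' e2']]; subst.
  + exact: Gf g g'.
  + by case: (hx0 _ g).
  + by case: (hx0 _ g').
  + by [].
- move=> x x' y [g|/pair_equal_spec[e1 e2]] [g'|/pair_equal_spec[e1' e2']]; subst.
  + exact: Gi g g'.
  + by case: (hy0 _ g).
  + by case: (hy0 _ g').
  + by [].
Qed.

Lemma sval_inj (T : Type) (P : T -> Prop) : injective (@proj1_sig T P).
Proof.
move=> [x px] [y py] /= e; subst y.
by rewrite (Prop_irrelevance px py).
Qed.

Section Hess.
Variable A : Type.
Variable iota : nat -> A.
Hypothesis iota_inj : injective iota.

Definition hdom (G : set ((A*A)*A)) x := exists z, G ((x,x),z).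
Definition Good (G : set ((A*A)*A)) :=
  [/\ (forall p z z', G (p,z) -> G (p,z') -> z = z'),
      (forall p p' z, G (p,z) -> G (p',z) -> p = p'),
      (forall x y, (exists z, G ((x,y),z)) <-> (hdom G x /\ hdom G y)),
      (forall p z, G (p,z) -> hdom G z) &
      (forall a b, G ((iota a, iota b), iota (pickle (a,b))))].
Definition PPh (G : set ((A*A)*A)) := (forall t, ~ G t) \/ Good G.

Definition G0 : set ((A*A)*A) :=
  fun t => exists a b, t = ((iota a, iota b), iota (pickle (a,b))).

Lemma Good_G0 : Good G0.
Proof.
split.
- move=> p z z' [a [b /pair_equal_spec [-> ->]]] [a' [b' /pair_equal_spec [e ->]]].
  case/pair_equal_spec: e => /iota_inj -> /iota_inj -> //.
- move=> p p' z [a [b /pair_equal_spec [-> ->]]] [a' [b' /pair_equal_spec [-> e]]].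
  by move/iota_inj/(pcan_inj pickleK): e => [-> ->].
- move=> x y; split.
    move=> [z [a [b /pair_equal_spec [/pair_equal_spec [-> ->] _]]]].
    by split; [exists (iota (pickle (a,a))); exists a, a | exists (iota (pickle (b,b))); exists b, b].
  move=> [[z1 [a [_ /pair_equal_spec [/pair_equal_spec [-> _] _]]]]
          [z2 [b [_ /pair_equal_spec [/pair_equal_spec [-> _] _]]]]].
  by exists (iota (pickle (a,b))); exists a, b.
- move=> p z [a [b /pair_equal_spec [_ ->]]].
  by exists (iota (pickle (pickle (a,b), pickle (a,b)))); exists (pickle (a,b)), (pickle (a,b)).
- by move=> a b; exists a, b.
Qed.

Lemma PPh_chain (F : set (set ((A*A)*A))) : F `<=` PPh -> total_on F subset ->
  PPh (\bigcup_(X in F) X).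
Proof.
move=> FP tot.
have mg X t : F X -> X t -> Good X.
  by move=> FX Xt; case: (FP X FX) => // h; case: (h t).
case: (pselect (exists t, (\bigcup_(X in F) X) t)); last first.
  by move=> h; left => t ht; apply: h; exists t.
move=> [t0 [X0 FX0 X0t0]]; right.
have G0g := mg _ _ FX0 X0t0.
have up X1 X2 t1 t2 : F X1 -> F X2 -> X1 t1 -> X2 t2 ->
    exists X, [/\ F X, X t1, X t2 & Good X].
  move=> F1 F2 h1 h2; case: (tot _ _ F1 F2) => s.
  - by exists X2; split => //; [apply: s | apply: (mg _ _ F2 h2)].
  - by exists X1; split => //; [apply: s | apply: (mg _ _ F1 h1)].
split.
- move=> p z z' [X1 F1 h1] [X2 F2 h2].
  by have [X [_ a b [g _ _ _ _]]] := up _ _ _ _ F1 F2 h1 h2; apply: g a b.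
- move=> p p' z [X1 F1 h1] [X2 F2 h2].
  by have [X [_ a b [_ g _ _ _]]] := up _ _ _ _ F1 F2 h1 h2; apply: g a b.
- move=> x y; split.
    move=> [z [X1 F1 h1]]; have [_ _ g _ _] := mg _ _ F1 h1.
    have [[z1 e1] [z2 e2]] : hdom X1 x /\ hdom X1 y by apply/g; exists z.
    by split; [exists z1; exists X1|exists z2; exists X1].
  move=> [[z1 [X1 F1 h1]] [z2 [X2 F2 h2]]].
  have [X [FX a b [_ _ g _ _]]] := up _ _ _ _ F1 F2 h1 h2.
  have [z hz] : exists z, X ((x,y),z) by apply/g; split; [exists z1|exists z2].
  by exists z; exists X.
- move=> p z [X1 F1 h1]; have [_ _ _ g _] := mg _ _ F1 h1.
  by case: (g _ _ h1) => z' h'; exists z'; exists X1.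
- by move=> a b; exists X0 => //; case: G0g.
Qed.

Lemma hess_main : card_le (A * A) A.
Proof.
have [G [PG Gmax]] : exists G, PPh G /\ forall B, G `<` B -> ~ PPh B.
  by apply: Zorn_bigcup; apply: PPh_chain.
have GG : Good G.
  case: PG => // h; exfalso; apply: (Gmax G0); last by right; exact: Good_G0.
  split; first by move=> t /h.
  by move=> s; apply: (h ((iota 0, iota 0), iota (pickle (0,0)))); apply: s; exists 0, 0.
case: GG => Gf Gi Gd Gr Gb.
pose D := hdom G.
pose sD := {x | D x}.
have Fex (a b : sD) : exists z, G ((proj1_sig a, proj1_sig b), z).
  by apply/Gd; split; [exact: (proj2_sig a)|exact: (proj2_sig b)].
pose F (p : sD * sD) : sD :=
  exist _ (proj1_sig (cid (Fex p.1 p.2))) (Gr _ _ (proj2_sig (cid (Fex p.1 p.2)))).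
have Finj : injective F.
  move=> [a b] [a' b'] /(congr1 (@proj1_sig _ _)) /=.
  case: (cid (Fex a b)) => z hz; case: (cid (Fex a' b')) => z' hz' /= e; subst z'.
  by case/pair_equal_spec: (Gi _ _ _ hz hz') => /(@sval_inj _ _) -> /(@sval_inj _ _) ->.
have D0 : D (iota 0) by exists (iota (pickle (0,0))); apply: Gb.
have D1 : D (iota 1) by exists (iota (pickle (1,1))); apply: Gb.
pose d0 : sD := exist _ _ D0.
pose d1 : sD := exist _ _ D1.
pose gb (a : sD) (b : bool) := F (a, if b then d1 else d0).
have gbinj a b a' b' : gb a b = gb a' b' -> a = a' /\ b = b'.
  move/Finj/pair_equal_spec => [-> e]; split => //.
  case: b b' e => [] [] // /(congr1 (@proj1_sig _ _)) /= /iota_inj //.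
have nle : ~ card_le sD {x | ~ D x}.
  move=> [phi phiinj].
  pose D' x := D x \/ exists d, proj1_sig (phi d) = x.
  pose phinv (x : A) : sD := match pselect (exists d, proj1_sig (phi d) = x) with
     | left h => proj1_sig (cid h) | right _ => d0 end.
  have phinvK d : phinv (proj1_sig (phi d)) = d.
    rewrite /phinv; case: pselect => [h|h]; last by case: h; exists d.
    by move: (proj2_sig (cid h)) => /(@sval_inj _ _) /phiinj.
  pose code (x : A) : sD := match pselect (D x) with
     | left h => gb (exist _ x h) true | right _ => gb (phinv x) false end.
  have codeinj x y : D' x -> D' y -> code x = code y -> x = y.
    rewrite /code; case: pselect => [hx|hx]; case: pselect => [hy|hy].
    - by move=> _ _ /gbinj [/(congr1 (@proj1_sig _ _))].
    - by move=> _ _ /gbinj [].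
    - by move=> _ _ /gbinj [].
    - move=> [//|[dx <-]] [//|[dy <-]] /gbinj [].
      by rewrite !phinvK => ->.
  pose Phi x y := F (code x, code y).
  pose NG (t : (A*A)*A) := D' t.1.1 /\ D' t.1.2 /\ ~ (D t.1.1 /\ D t.1.2) /\
       t.2 = proj1_sig (phi (Phi t.1.1 t.1.2)).
  pose G' t := G t \/ NG t.
  have GD x y z : G ((x,y),z) -> D x /\ D y by move=> h; apply/Gd; exists z.
  have domG' x : hdom G' x <-> D' x.
    split.
      move=> [z [h|[h _]]]; last by [].
      by left; case: (GD _ _ _ h).
    move=> h; case: (pselect (D x)) => [[z hz]|nx]; first by exists z; left.
    exists (proj1_sig (phi (Phi x x))); right; split => //; split => //; split => //.
    by case.
  have phiD d : ~ D (proj1_sig (phi d)) by case: (phi d).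
  apply: (Gmax G'); last first.
    right; split.
    - move=> [x y] z z'; rewrite /G' /NG /= => [[h|[_ [_ [nd e]]]] [h'|[_ [_ [nd' e']]]]].
      + exact: Gf h h'.
      + by case: nd'; apply: GD h.
      + by case: nd; apply: GD h'.
      + by rewrite e e'.
    - move=> [x y] [x' y'] z; rewrite /G' /NG /= => [[h|[hx [hy [nd e]]]] [h'|[hx' [hy' [nd' e']]]]].
      + exact: Gi h h'.
      + by subst; case: (phiD _ (Gr _ _ h)).
      + by subst; case: (phiD _ (Gr _ _ h')).
      + move: e e' => -> /(@sval_inj _ _) /phiinj /Finj /pair_equal_spec [c1 c2].
        by rewrite (codeinj _ _ hx hx' c1) (codeinj _ _ hy hy' c2).
    - move=> x y; rewrite domG' domG'; split.
        rewrite /G' /NG /= => [[z [h|[hx [hy _]]]]]; last by [].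
        by case: (GD _ _ _ h); split; left.
      move=> [hx hy]; case: (pselect (D x /\ D y)) => [[dx dy]|nd].
        by case: (Gd x y).2 => // z hz; exists z; left.
      by exists (proj1_sig (phi (Phi x y))); right.
    - move=> [x y] z; rewrite domG' /G' /NG /= => [[h|[_ [_ [_ ->]]]]].
        by left; apply: Gr h.
      by right; eexists.
    - by move=> a b; left; apply: Gb.
  split; first by move=> t h; left.
  move=> sub.
  pose x := proj1_sig (phi d0).
  have : G' ((x,x), proj1_sig (phi (Phi x x))).
    right; split; first by right; exists d0.
    split; first by right; exists d0.
    by split => //; case=> /phiD.
  by move/sub/GD => [/phiD].
have [rho rhoinj] : card_le {x | ~ D x} sD.
  by case: (cle_total sD {x | ~ D x}).
pose emb (x : A) : sD := match pselect (D x) with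
   | left h => gb (exist _ x h) true | right h => gb (rho (exist _ x h)) false end.
have embinj : injective emb.
  move=> x y; rewrite /emb; case: pselect => [hx|hx]; case: pselect => [hy|hy].
  - by move=> /gbinj [/(congr1 (@proj1_sig _ _))].
  - by move=> /gbinj [].
  - by move=> /gbinj [].
  - by move=> /gbinj [/rhoinj /(congr1 (@proj1_sig _ _))].
exists (fun p => proj1_sig (F (emb p.1, emb p.2))).
move=> [a b] [a' b'] e; move: (@sval_inj _ _ _ _ e) => /Finj /pair_equal_spec [e1 e2]; move: (embinj _ _ e1) (embinj _ _ e2) => /= -> -> //.
Qed.

End Hess.

Lemma hess (A : Type) : card_le nat A -> card_le (A * A) A.
Proof. by move=> [i ii]; apply: hess_main ii. Qed.
Local Close Scope classical_set_scope.

Lemma cle_prod (A B A' B' : Type) : card_le A A' -> card_le B B' -> card_le (A * B) (A' * B').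
Proof.
move=> [f fi] [g gi]; exists (fun p => (f p.1, g p.2)) => [[a b] [a' b']] /= /pair_equal_spec [/fi -> /gi ->] //.
Qed.

Lemma cle_ord_nat k : card_le 'I_k nat.
Proof. by exists (@nat_of_ord k); apply: val_inj. Qed.

Lemma cle_option (A : Type) : card_le nat A -> card_le (option A) A.
Proof.
move=> hA; have [i ii] := hA; apply: cle_trans (hess hA).
exists (fun o => match o with Some a => (a, i 0) | None => (i 0, i 1) end).
move=> [a|] [b|] //= /pair_equal_spec.
- by case=> ->.
- by case=> _ /ii.
- by case=> _ /ii.
Qed.

Lemma cle_ffun (A : Type) n : card_le nat A -> card_le ('I_n -> A) A.
Proof.
move=> hA; have [i ii] := hA.
elim: n => [|n [g gi]].
  exists (fun _ => i 0) => f f' _; apply: functional_extensionality_dep => -[] //.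
apply: cle_trans (hess hA).
exists (fun f : 'I_n.+1 -> A => (f ord0, g (fun j => f (lift ord0 j)))).
move=> f f' /pair_equal_spec [e /gi e']; apply: functional_extensionality_dep => j.
case: (unliftP ord0 j) => [j' ->|->] //.
by have := congr1 (fun h => h j') e'.
Qed.

Lemma no_nat_fin (F : finType) : ~ card_le nat F.
Proof.
move=> [f fi].
have : injective (fun j : 'I_(#|F|.+1) => f j) by move=> a b /fi /val_inj.
by move/leq_card; rewrite card_ord ltnn.
Qed.

Lemma fin_or_inf (C : Type) : ~ card_le nat C -> exists n, card_le C 'I_n.
Proof.
move=> nC; have [[g gi]|hn] := cle_total C nat; last by case: nC.
case: (pselect (exists n, forall c, g c < n)) => [[n hn]|nb].
  by exists n; exists (fun c => Ordinal (hn c)) => a b /(congr1 val) /= /gi.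
exfalso; apply: nC.
have ex m : exists c, m <= g c.
  apply: contrapT => h; apply: nb; exists m => c; rewrite ltnNge; apply/negP => hc.
  by apply: h; exists c.
pose nxt m := proj1_sig (cid (ex m)).
have nxtP m : m <= g (nxt m) by rewrite /nxt; case: cid.
pose fix h (m : nat) : C := match m with 0 => nxt 0 | m'.+1 => nxt (g (h m')).+1 end.
have hinc a b : a < b -> g (h a) < g (h b).
  elim: b => [//|b IH]; rewrite ltnS leq_eqVlt => /orP [/eqP ->|/IH hb].
    exact: nxtP.
  by apply: (ltn_trans hb); apply: nxtP.
exists h => a b e; apply/eqP; rewrite eqn_leq; apply/andP; split; rewrite leqNgt; apply/negP.
- by move/hinc; rewrite e ltnn.
- by move/hinc; rewrite e ltnn.
Qed.

Lemma pigeon (Z D : Type) (h : Z -> D) k : 0 < k -> ~ card_le Z (D * 'I_k) ->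
  exists y, exists z : 'I_k -> Z, injective z /\ forall j, h (z j) = y.
Proof.
move=> k0 nle; apply: contrapT => nex; apply: nle.
have fib y : card_le {w | h w = y} 'I_k.
  case: (cle_total {w | h w = y} 'I_k) => // [[e ei]].
  exfalso; apply: nex; exists y, (fun j => proj1_sig (e j)); split.
    by move=> a b /(@sval_inj _ _) /ei.
  by move=> j; apply: (proj2_sig (e j)).
pose inj y := proj1_sig (cid (fib y)).
have injP y : injective (inj y) by rewrite /inj; case: cid.
pose io y (w : Z) : 'I_k := match pselect (h w = y) with
  | left p => inj y (exist _ w p) | right _ => Ordinal k0 end.
exists (fun w => (h w, io (h w) w)) => a b /pair_equal_spec [e].
rewrite e /io; case: pselect => [pa|pa]; last by [].
case: pselect => [pb|pb]; last by [].
by move/injP/(congr1 (@proj1_sig _ _)).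
Qed.

Lemma succ_uniq n (K A B : Type) : is_succ_pow n K A -> is_succ_pow n K B -> card_le A B.
Proof.
elim: n A B => [|n IH] A B /=.
  move=> [f [f' fK f'K]] [g gb]; exists (g \o f') => x y /= e.
  by rewrite -(f'K x) -(f'K y); congr f; apply: (bij_inj gb).
move=> [M [hM [[MA nAM] minA]]] [M' [hM' [[M'B nBM'] minB]]].
apply: minA; split; first by apply: cle_trans (IH _ _ hM hM') M'B.
by move=> BM; apply: nBM'; apply: cle_trans BM (IH _ _ hM hM').
Qed.

Definition img (T U : Type) (f : T -> U) (X : T -> Prop) (y : U) := exists x, X x /\ f x = y.

Lemma cle_img (T U : Type) (f : T -> U) (X : T -> Prop) : injective f ->
  card_le {y | img f X y} {x | X x}.
Proof.
move=> fi.
exists (fun y => exist X (proj1_sig (cid (proj2_sig y))) (proj1 (proj2_sig (cid (proj2_sig y))))).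
move=> [y1 h1] [y2 h2] /(congr1 (@proj1_sig _ _)) /= e; apply: sval_inj => /=.
have e1 := proj2 (proj2_sig (cid h1)); have e2 := proj2 (proj2_sig (cid h2)).
by rewrite -e1 -e2 e.
Qed.

Lemma cle_img' (T U : Type) (f : T -> U) (X : T -> Prop) : injective f ->
  card_le {x | X x} {y | img f X y}.
Proof.
move=> fi; exists (fun x => exist (img f X) (f (proj1_sig x)) (ex_intro _ (proj1_sig x) (conj (proj2_sig x) erefl))).
by move=> a b /(congr1 (@proj1_sig _ _)) /= /fi /sval_inj.
Qed.

Lemma chain n (K L : Type) : is_succ_pow n K L -> exists S : nat -> L -> Prop,
  [/\ (forall i j x, i <= j -> S i x -> S j x),
      card_le K {x | S 0 x},
      (forall i, i < n -> ~ card_le {x | S i.+1 x} {x | S i x}) &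
      (forall i, i <= n -> exists M, is_succ_pow i K M /\ card_le {x | S i x} M)].
Proof.
elim: n L => [|n IH] L /=.
  move=> [f [f' fK f'K]]; exists (fun _ _ => True); split => //.
    by exists (fun x => exist (fun _ => True) (f x) I) => a b /(congr1 (@proj1_sig _ _)) /= /(can_inj fK).
  move=> i; rewrite leqn0 => /eqP ->; exists L; split; first by exists f, f'.
  by exists (@proj1_sig _ _); apply: sval_inj.
move=> [M [hM [[[f fi] nLM] minL]]].
have [S' [nest cK strict sz]] := IH _ hM.
exists (fun i y => if i <= n then img f (S' i) y else True); split.
- move=> i j y ij; case: ifP => iN; case: ifP => jN //.
    move=> [x [Sx <-]]; exists x; split => //; exact: nest Sx.
  by rewrite (leq_trans ij jN) in iN.
- rewrite leq0n; apply: cle_trans cK (cle_img' _ fi).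
- move=> i; rewrite ltnS => iN; case: (ltnP i n) => iN'; last first.
    have -> : i = n by apply/eqP; rewrite eqn_leq iN iN'.
    rewrite ?leqnn => h; apply: nLM.
    have [M0 [hM0 le0]] := sz n (leqnn n).
    apply: cle_trans (succ_uniq hM0 hM).
    apply: cle_trans le0; apply: cle_trans (cle_img _ fi).
    apply: cle_trans h.
    by exists (fun x => exist (fun _ => True) x I) => a b /(congr1 (@proj1_sig _ _)).
  rewrite ?iN' ?(ltnW iN') => h; apply: (strict _ iN').
  apply: cle_trans (cle_img' _ fi) _; apply: cle_trans h _; exact: cle_img.
- move=> i iN; case: (leqP i n) => iN'; last first.
    have -> : i = n.+1 by apply/eqP; rewrite eqn_leq iN iN'.
    rewrite ?ltnn; exists L; split; first by exists M; split=> //; split=> //; split=> //; exists f.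
    by exists (@proj1_sig _ _); apply: sval_inj.
  rewrite ?iN'; have [M0 [h0 l0]] := sz i iN'; exists M0; split => //.
  by apply: cle_trans l0; apply: cle_img.
Qed.

Section Main.
Variables (U C : Type) (d k : nat) (S : nat -> U -> Prop) (c : ('I_d -> U) -> C).
Hypothesis k0 : 0 < k.
Hypothesis nest : forall i j x, i <= j -> S i x -> S j x.
Hypothesis H0 : ~ card_le {x | S 0 x} (C * 'I_k).
Hypothesis Hm : forall m, 0 < m -> m < d ->
  ~ card_le {x | S m x} ((C * ('I_d -> 'I_k -> option {x | S m.-1 x})) * 'I_k).

Definition CL m (b : 'I_d -> U) (t : 'I_d -> 'I_k -> U) (g : C) :=
  [/\ forall i : 'I_d, i < m -> injective (t i),
       forall (i : 'I_d) j, S i (t i j),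
       forall (i : 'I_d) j, m <= i -> t i j = b i &
       forall J : 'I_d -> 'I_k, c (fun i => t i (J i)) = g].

Lemma claim m : m <= d -> forall b : 'I_d -> U, (forall i : 'I_d, S i (b i)) ->
  exists t g, CL m b t g.
Proof.
elim: m => [|m IH]; move=> md b hb.
  exists (fun i _ => b i), (c b); split => //.
pose bz (z : {x | S m x}) (i : 'I_d) := if val i == m then proj1_sig z else b i.
have hbz z (i : 'I_d) : S i (bz z i).
  rewrite /bz; case: eqP => [->|_]; [exact: proj2_sig z | exact: hb].
have ex z : exists tg : ('I_d -> 'I_k -> U) * C, CL m (bz z) tg.1 tg.2.
  by have [t [g h]] := IH (ltnW md) (bz z) (hbz z); exists (t, g).
pose TG z := proj1_sig (cid (ex z)).
have TGP z : CL m (bz z) (TG z).1 (TG z).2 by rewrite /TG; case: cid.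
have [W [F [nle Fk]]] : exists W (F : {x | S m x} -> W),
    ~ card_le {x | S m x} (W * 'I_k) /\
    (forall z z', F z = F z' -> (TG z).2 = (TG z').2 /\
        forall i : 'I_d, i < m -> (TG z).1 i = (TG z').1 i).
  case: (posnP m) => [m0|mp].
    subst m; exists C, (fun z => (TG z).2); split => // z z' e; split => //.
  pose opt u : option {x | S m.-1 x} := match pselect (S m.-1 u) with
     left p => Some (exist _ u p) | right _ => None end.
  exists (C * ('I_d -> 'I_k -> option {x | S m.-1 x}))%type.
  exists (fun z => ((TG z).2, fun i j => if val i < m then opt ((TG z).1 i j) else None)).
  split; first exact: Hm mp md.
  move=> z z' /pair_equal_spec [e1 e2]; split => // i im.
  apply: functional_extensionality_dep => j.
  have := congr1 (fun h => h i j) e2; rewrite /= im /opt.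
  have Si (w : {x | S m x}) : S m.-1 ((TG w).1 i j).
    by apply: (nest (i := i)); [rewrite -ltnS prednK | case: (TGP w)].
  case: pselect => [p|/(_ (Si z))//]; case: pselect => [p'|/(_ (Si z'))//].
  by move=> h; have := congr1 (fun o => if o is Some w then proj1_sig w else (TG z).1 i j) h.
have [y [zs [zsi zsy]]] := pigeon F k0 nle.
pose z0 := zs (Ordinal k0).
pose t i j := if val i < m then (TG z0).1 i j
   else if val i == m then proj1_sig (zs j) else b i.
exists t, (TG z0).2; split.
- move=> i; rewrite ltnS leq_eqVlt => /orP [/eqP im|im] j j'; rewrite /t /=.
    by rewrite im ltnn eqxx => /(@sval_inj _ _) /zsi.
  by rewrite im; case: (TGP z0) => h _ _ _; apply: h.
- move=> i j; rewrite /t /=; case: ltnP => _; first by case: (TGP z0).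
  by case: eqP => [e|_]; [rewrite e; exact: proj2_sig (zs j) | exact: hb].
- move=> i j im; rewrite /t /= ltnNge (ltnW im) /=.
  by rewrite (gtn_eqF im).
- move=> J; pose z := zs (J (Ordinal md)).
  have [eg ei] := Fk z z0 (etrans (zsy _) (esym (zsy _))).
  rewrite -eg; case: (TGP z) => _ _ hb' hc; rewrite -(hc J); congr c.
  apply: functional_extensionality_dep => i; rewrite /t /=.
  case: ltnP => im; first by rewrite (ei i im).
  rewrite hb' // /bz; case: eqP => [e|ne] //.
  by rewrite /z; congr (proj1_sig (zs (J _))); apply: val_inj.
Qed.

End Main.

Lemma cle_arrow (A B : Type) n : card_le A B -> card_le ('I_n -> A) ('I_n -> B).
Proof.
move=> [f fi]; exists (fun g i => f (g i)) => g g' e.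
apply: functional_extensionality_dep => i; apply: fi.
exact: (congr1 (fun h => h i) e).
Qed.

Lemma cle_absorb (B C : Type) d k : card_le nat B -> card_le C B ->
  card_le ((C * ('I_d -> 'I_k -> option B)) * 'I_k) B.
Proof.
move=> nB CB.
have kB : card_le 'I_k B by apply: cle_trans (cle_ord_nat k) nB.
have fB : card_le ('I_d -> 'I_k -> option B) B.
  apply: cle_trans (cle_ffun d nB); apply: cle_arrow.
  apply: cle_trans (cle_ffun k nB); apply: cle_arrow; exact: cle_option.
apply: cle_trans (hess nB); apply: cle_prod => //.
apply: cle_trans (hess nB); exact: cle_prod.
Qed.

Theorem lemma1p2 (d k : nat) (hd : 1 <= d) (hk : 2 <= k)
  (K : Type) (hK : card_le nat K)
  (A : 'I_d -> Type) (P : dtuple A -> Prop) (hP : @is_template d k A P)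
  (X : 'I_d -> Type) (hX : forall i : 'I_d, card_ge_succ_pow i K (X i)) :
  chi_ge (@L_edge d k A X P) K.
Proof.
move=> C c' [CK nKC] hprop.
have k0 : 0 < k by apply: leq_trans hk.
have dlt : d.-1 < d by rewrite prednK.
have [L [hL _]] := hX (Ordinal dlt).
have [S [nest cK strict sz]] := chain hL.
have E0 (i : 'I_d) : card_le {x | S i x} (X i).
  have iN : (i : nat) <= d.-1 by rewrite -ltnS prednK.
  have [M [hM le]] := sz i iN.
  have [Li [hLi LX]] := hX i.
  apply: cle_trans le _; apply: cle_trans (succ_uniq hM hLi) LX.
pose E i := proj1_sig (cid (E0 i)).
have Ei i : injective (E i) by rewrite /E; case: cid.
have S0S j : card_le {x | S 0 x} {x | S j x}.
  by exists (fun x => exist _ (proj1_sig x) (nest 0 j _ (leq0n j) (proj2_sig x))) => a b /(congr1 (@proj1_sig _ _)) /= /sval_inj.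
have nS0 : card_le nat {x | S 0 x} by apply: cle_trans cK.
have H0 : ~ card_le {x | S 0 x} (C * 'I_k).
  move=> h; have KCk := cle_trans cK h.
  case: (pselect (card_le nat C)) => [nC|nC].
    apply: nKC; apply: cle_trans KCk _; apply: cle_trans (hess nC).
    by apply: cle_prod; [exact: cle_refl | exact: cle_trans (cle_ord_nat k) nC].
  have [n Cn] := fin_or_inf nC.
  apply: (@no_nat_fin ('I_n * 'I_k)%type).
  apply: cle_trans hK _; apply: cle_trans KCk _; apply: cle_prod => //; exact: cle_refl.
have Hm m : 0 < m -> m < d ->
    ~ card_le {x | S m x} ((C * ('I_d -> 'I_k -> option {x | S m.-1 x})) * 'I_k).
  move=> m0 md h; apply: (strict m.-1); first by rewrite -ltnS !prednK.
  rewrite prednK //; apply: cle_trans h _; apply: cle_absorb.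
    exact: cle_trans nS0 (S0S _).
  apply: cle_trans CK _; apply: cle_trans cK (S0S _).
have [n0 _] := nS0.
pose s0 := n0 0.
have bS (i : nat) : S i (proj1_sig s0) by apply: nest (leq0n i) (proj2_sig s0).
pose b (i : 'I_d) := proj1_sig s0.
pose E' (i : 'I_d) (u : L) : X i := match pselect (S i u) with
  | left p => E i (exist _ u p) | right _ => E i (exist _ _ (bS i)) end.
have E'inj (i : 'I_d) u v : S i u -> S i v -> E' i u = E' i v -> u = v.
  move=> su sv; rewrite /E'; case: pselect => [p|//]; case: pselect => [q|//].
  by move/Ei/(congr1 (@proj1_sig _ _)).
pose cc (u : 'I_d -> L) := c' (fun i => E' i (u i)).
have [t [g [tinj tS _ tmono]]] := claim cc k0 nest H0 Hm (leqnn d) (fun i => bS i).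
case: hP => e [einj eP].
pose rep (i : 'I_d) (a : A i) : 'I_k := match pselect (exists j, e j i = a) with
  | left h => proj1_sig (cid h) | right _ => Ordinal k0 end.
have repP i j : e (rep i (e j i)) i = e j i.
  rewrite /rep; case: pselect => [h|h]; last by case: h; exists j.
  exact: proj2_sig (cid h).
pose q j : dtuple X := fun i => E' i (t i (rep i (e j i))).
have qinj : injective q.
  move=> j j' h; apply: einj; apply: functional_extensionality_dep => i.
  have hh := congr1 (fun v => v i) h; simpl in hh.
  have e' := tinj i (ltn_ord i) _ _ (E'inj i _ _ (tS _ _) (tS _ _) hh).
  by rewrite -(repP i j) -(repP i j') e'.
have qcol j : c' (q j) = g by rewrite -(tmono (fun i => rep i (e j i))).
pose Q (v : dtuple X) := exists j, q j = v.
have hom : hom_image P Q.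
  pose J (x : {x | P x}) := proj1_sig (cid ((eP (proj1_sig x)).1 (proj2_sig x))).
  have JP x : e (J x) = proj1_sig x by rewrite /J; case: cid.
  exists (fun x => exist Q (q (J x)) (ex_intro _ (J x) erefl)); split.
    move=> [y [j hj]].
    exists (exist P (e j) ((eP _).2 (ex_intro _ j erefl))).
    apply: sval_inj => /=; rewrite -hj; congr q; apply: einj; exact: JP.
  move=> x y i hxy /=; rewrite /q JP JP /=; congr (E' i (t i (rep i _))); exact: hxy.
have [x [y [Qx [Qy nxy]]]] := hprop Q (conj (ex_intro _ q (conj qinj (fun v => iff_refl _))) hom).
by case: Qx Qy nxy => jx <- [jy <-]; rewrite !qcol.
Qed.
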